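(* Let $q$, $\lambda\in(0,\infty)$, $U_1,U_2,U_3$ be as in the context. (i) For any constants $\beta_2,\beta_3$, if $R$ denotes the third component of $\beta_2U_2+\beta_3U_3$, then for every $x_0>0$, \[\lim_{N\to\infty}\frac{\int_{x_0}^NR(x,\lambda)\,dx}{\int_{x_0}^NR_1(x,\lambda)\,dx}=0.\] (ii) If $U_1=\tilde a((u')^2,-2uu',u^2)^T+\tilde b(u'v',-(uv'+u'v),uv)^T+\tilde c((v')^2,-2vv',v^2)^T$, then $\tilde a(\lambda)>0$ and $\tilde c(\lambda)>0$ for all $\lambda\in(0,\infty)$.
   Context: $q(x)=\frac{q_0}{x^2}+\frac{q_1}{x}+\sum_{n\ge0}q_{n+2}x^n$, real coefficients, convergent on $(0,\infty)$, $q_0\ge-\tfrac14$, $q_0,q_1$ not both zero; for some $x_0>0$ either $q\in L_1(x_0,\infty)$, or $q'\in L_1(x_0,\infty)$, $q\in AC_{loc}[x_0,\infty)$ and $q\to0$ at $\infty$. Appell system: $(P,Q,R)'=M(P,Q,R)^T$, $M=\begin{pmatrix}0&\lambda-q&0\\-2&0&2(\lambda-q)\\0&-1&0\end{pmatrix}$; $U_1=(P_1,Q_1,R_1)^T$ is its unique solution with $\lim_{x\to\infty}U_1=(\sqrt\lambda,0,1/\sqrt\lambda)^T$. For fixed $c>0$, $\gamma(x)=\int_c^xdt/R_1(t,\lambda)$, $U_2=(P_1\cos2\gamma+(Q_1/R_1)\sin2\gamma-(2/R_1)\cos2\gamma,\ Q_1\cos2\gamma+2\sin2\gamma,\ R_1\cos2\gamma)^T$,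 $U_3=(P_1\sin2\gamma-(Q_1/R_1)\cos2\gamma-(2/R_1)\sin2\gamma,\ Q_1\sin2\gamma-2\cos2\gamma,\ R_1\sin2\gamma)^T$. For fixed $A>0$, $u,v$ solve $-y''+qy=\lambda y$ with $u(A)=1,u'(A)=0,v(A)=0,v'(A)=1$, and $\tilde a,\tilde b,\tilde c$ are real. *)

(* Defs.v *)
From Stdlib Require Import Reals.
From Coquelicot Require Import Coquelicot.
Open Scope R_scope.

(* The potential: q(x) = q0/x^2 + q1/x + sum_{n>=0} a n x^n  on (0,oo),
   where a n = q_{n+2}. *)
Definition q_form (q0 q1 : R) (a : nat -> R) (x : R) : R :=
  q0 / x ^ 2 + q1 / x + PSeries a x.

Definition L1_tail (f : R -> R) (X : R) : Prop :=
  ex_RInt_gen (fun t => Rabs (f t)) (at_point X) (Rbar_locally p_infty).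

Definition appell_sol (q : R -> R) (lam : R) (P Q Rr : R -> R) : Prop :=
  forall x, 0 < x ->
    is_derive P x ((lam - q x) * Q x) /\
    is_derive Q x (-2 * P x + 2 * (lam - q x) * Rr x) /\
    is_derive Rr x (- Q x).

Definition gam (R1 : R -> R) (c x : R) : R := RInt (fun t => / R1 t) c x.

Definition U2 (P1 Q1 R1 : R -> R) (c x : R) : R * R * R :=
  let g := gam R1 c x in
  (P1 x * cos (2 * g) + (Q1 x / R1 x) * sin (2 * g) - (2 / R1 x) * cos (2 * g),
   Q1 x * cos (2 * g) + 2 * sin (2 * g),
   R1 x * cos (2 * g)).

Definition U3 (P1 Q1 R1 : R -> R) (c x : R) : R * R * R :=
  let g := gam R1 c x in
  (P1 x * sin (2 * g) - (Q1 x / R1 x) * cos (2 * g) - (2 / R1 x) * sin (2 * g),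
   Q1 x * sin (2 * g) - 2 * cos (2 * g),
   R1 x * sin (2 * g)).

Definition third (t : R * R * R) : R := snd t.

Definition sl_sol (q : R -> R) (lam : R) (y dy : R -> R) : Prop :=
  forall x, 0 < x -> is_derive y x (dy x) /\ is_derive dy x ((q x - lam) * y x).

(* Main.v *)
Require Import Defs.
From Stdlib Require Import Reals Lra.
From Coquelicot Require Import Coquelicot.
Open Scope R_scope.

Ltac rwD H := let e := type of H in match e with is_derive ?f ?t ?l =>
  replace (Derive (fun x : R => f x) t) with l by (symmetry; apply is_derive_unique; exact H) end.

Lemma inv_const (q : R -> R) (lam : R) (P1 Q1 R1 : R -> R) :
  0 < lam ->
  appell_sol q lam P1 Q1 R1 ->
  is_lim P1 p_infty (sqrt lam) ->
  is_lim Q1 p_infty 0 ->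
  is_lim R1 p_infty (/ sqrt lam) ->
  forall x, 0 < x -> 4 * P1 x * R1 x - Q1 x ^ 2 = 4.
Proof.
intros Hl Ha HP HQ HR x Hx.
set (I := fun y => 4 * P1 y * R1 y - Q1 y ^ 2).
assert (HD : forall t, 0 < t -> is_derive I t 0).
{ intros t Ht. destruct (Ha t Ht) as [dP [dQ dR]].
  unfold I.
  auto_derive.
  repeat split; eexists; eassumption.
  rwD dP; rwD dQ; rwD dR.
  ring. }
assert (HI : is_lim I p_infty 4).
{ unfold I.
  assert (sp : 0 < sqrt lam) by (apply sqrt_lt_R0; lra).
  assert (H1 : is_lim (fun y => 4 * P1 y) p_infty (4 * sqrt lam)).
  { apply (is_lim_mult (fun _ => 4) P1 p_infty 4 (sqrt lam)). apply is_lim_const. exact HP. simpl; auto. }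
  assert (H2 : is_lim (fun y => 4 * P1 y * R1 y) p_infty (4 * sqrt lam * / sqrt lam)).
  { apply (is_lim_mult _ R1 p_infty (4 * sqrt lam) (/ sqrt lam)). exact H1. exact HR. simpl; auto. }
  assert (H3 : is_lim (fun y => Q1 y * Q1 y) p_infty (0 * 0)).
  { apply (is_lim_mult Q1 Q1 p_infty 0 0); auto. simpl; auto. }
  assert (H4 : is_lim (fun y => 4 * P1 y * R1 y - Q1 y * Q1 y) p_infty (4 * sqrt lam * / sqrt lam - 0 * 0)).
  { apply (is_lim_minus _ _ p_infty (4 * sqrt lam * / sqrt lam) (0*0)). exact H2. exact H3. unfold is_Rbar_minus, is_Rbar_plus; simpl; reflexivity. }
  replace (4 * sqrt lam * / sqrt lam - 0 * 0) with 4 in H4 by (field; lra).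
  eapply is_lim_ext; [|exact H4]. intros; simpl; ring. }
assert (HC : is_lim (fun _ => I x) p_infty 4).
{ eapply is_lim_ext_loc; [|exact HI]. exists x. intros y Hy.
  symmetry. apply eq_is_derive. intros t Ht. apply HD. lra. lra. }
apply is_lim_unique in HC. rewrite Lim_const in HC. injection HC. auto.
Qed.
Lemma lim_ev (f : R -> R) (l : R) : is_lim f p_infty l ->
  forall eps, 0 < eps -> exists M, forall y, M < y -> Rabs (f y - l) < eps.
Proof.
intros H eps He. apply is_lim_spec in H. destruct (H (mkposreal eps He)) as [M HM].
exists M. exact HM.
Qed.

Lemma cont_seg (f : R -> R) (a b : R) : 0 < a -> 0 < b ->
  (forall x, 0 < x -> continuous f x) -> ex_RInt f a b.
Proof.
intros Ha Hb Hc. apply (@ex_RInt_continuous R_CompleteNormedModule). intros z Hz. apply Hc.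
destruct Hz as [Hz _]. eapply Rlt_le_trans; [|exact Hz].
unfold Rmin; destruct (Rle_dec a b); lra.
Qed.

Lemma derive_RInt_pos (f : R -> R) (c x : R) : 0 < c -> 0 < x ->
  (forall x, 0 < x -> continuous f x) ->
  is_derive (fun y => RInt f c y) x (f x).
Proof.
intros Hc Hx Hf. apply (@is_derive_RInt R_CompleteNormedModule f (fun y => RInt f c y) c x).
- apply locally_interval with 0 p_infty. simpl; lra. simpl; auto.
  intros y Hy _. simpl in Hy. apply RInt_correct. apply cont_seg; auto.
- apply Hf; auto.
Qed.
Lemma keyH (R1 Q1 g : R -> R) b2 b3 x :
  is_derive R1 x (- Q1 x) -> is_derive g x (/ R1 x) -> R1 x <> 0 ->
  is_derive (fun x => R1 x * R1 x * (b2 * sin (2 * g x) - b3 * cos (2 * g x)) / 2) x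
   ((b2 * (R1 x * cos (2 * g x)) + b3 * (R1 x * sin (2 * g x)))
    - R1 x * Q1 x * (b2 * sin (2 * g x) - b3 * cos (2 * g x))).
Proof.
intros dR dg nz. auto_derive.
- repeat split; eexists; eassumption.
- rwD dR; rwD dg. field. exact nz.
Qed.

Lemma cont_h (R1 Q1 g : R -> R) b2 b3 x :
  ex_derive R1 x -> ex_derive Q1 x -> ex_derive g x ->
  continuous (fun x => b2 * (R1 x * cos (2 * g x)) + b3 * (R1 x * sin (2 * g x))) x /\
  continuous (fun x => R1 x * Q1 x * (b2 * sin (2 * g x) - b3 * cos (2 * g x))) x.
Proof.
intros eR eQ eg. split; apply (@ex_derive_continuous R_AbsRing R_NormedModule); auto_derive; repeat split; auto.
Qed.
Lemma boundSC b2 b3 t : Rabs (b2 * sin t - b3 * cos t) <= Rabs b2 + Rabs b3.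
Proof.
pose proof (SIN_bound t); pose proof (COS_bound t).
unfold Rabs; repeat destruct Rcase_abs; nra.
Qed.

Lemma ratio (R1 Q1 g : R -> R) (L b2 b3 x0 : R) :
  0 < L -> 0 < x0 ->
  (forall x, 0<x -> is_derive R1 x (- Q1 x)) ->
  (forall x, 0<x -> ex_derive Q1 x) ->
  (forall x, 0<x -> is_derive g x (/ R1 x)) ->
  (forall x, 0<x -> R1 x <> 0) ->
  is_lim R1 p_infty L -> is_lim Q1 p_infty 0 ->
  is_lim (fun N => RInt (fun x => b2 * (R1 x * cos (2 * g x)) + b3 * (R1 x * sin (2 * g x))) x0 N
       / RInt R1 x0 N) p_infty 0.
Proof.
intros HL Hx0 dR eQ dg nz limR limQ.
set (h := fun x => b2 * (R1 x * cos (2 * g x)) + b3 * (R1 x * sin (2 * g x))).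
set (e := fun x => R1 x * Q1 x * (b2 * sin (2 * g x) - b3 * cos (2 * g x))).
set (H := fun x => R1 x * R1 x * (b2 * sin (2 * g x) - b3 * cos (2 * g x)) / 2).
assert (eR : forall x, 0<x -> ex_derive R1 x) by (intros x Hx; eexists; apply dR; exact Hx).
assert (eg : forall x, 0<x -> ex_derive g x) by (intros x Hx; eexists; apply dg; exact Hx).
assert (ch : forall x, 0<x -> continuous h x) by (intros x Hx; apply (cont_h R1 Q1 g b2 b3 x); auto).
assert (ce : forall x, 0<x -> continuous e x) by (intros x Hx; apply (cont_h R1 Q1 g b2 b3 x); auto).
assert (cR : forall x, 0<x -> continuous R1 x) by (intros x Hx; apply (@ex_derive_continuous R_AbsRing R_NormedModule); auto).
assert (FTC : forall N, x0 <= N -> RInt h x0 N = H N - H x0 + RInt e x0 N).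
{ intros N HN.
  assert (I1 : is_RInt (fun x => h x - e x) x0 N (minus (H N) (H x0))).
  { apply (@is_RInt_derive R_CompleteNormedModule H (fun x => h x - e x)).
    - intros x Hx. rewrite Rmin_left in Hx by lra.
      unfold H, h, e. apply keyH; [apply dR|apply dg|apply nz]; lra.
    - intros x Hx. rewrite Rmin_left in Hx by lra.
      apply (@continuous_minus R_UniformSpace R_AbsRing R_NormedModule h e); [apply ch|apply ce]; lra. }
  assert (X1 : ex_RInt (fun x => h x - e x) x0 N) by (eexists; exact I1).
  apply (@is_RInt_unique R_CompleteNormedModule) in I1.
  rewrite (RInt_ext h (fun x => plus (h x - e x) (e x))).
  rewrite (@RInt_plus R_CompleteNormedModule); auto. rewrite I1. reflexivity.
  apply cont_seg; auto; lra.
  intros x _. change (h x = h x - e x + e x). ring. }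
apply is_lim_spec. intros [eps Heps]. simpl.
set (K := Rabs b2 + Rabs b3).
assert (HK : 0 <= K) by (unfold K; pose proof (Rabs_pos b2); pose proof (Rabs_pos b3); lra).
set (dl := eps / (16 * (K + 1))).
assert (Hdl : 0 < dl) by (unfold dl; apply Rdiv_lt_0_compat; lra).
assert (HdlK : dl * K <= eps / 16).
{ unfold dl. apply (Rmult_le_reg_r (16 * (K+1))). lra.
  replace (eps / (16 * (K + 1)) * K * (16 * (K + 1))) with (eps * K) by (field; lra). nra. }
destruct (lim_ev R1 L limR (L/2)) as [M1 HM1]; [lra|].
destruct (lim_ev Q1 0 limQ dl Hdl) as [M2 HM2].
set (M := Rmax x0 (Rmax M1 M2) + 1).
assert (HM : x0 < M /\ M1 < M /\ M2 < M).
{ unfold M. pose proof (Rmax_l x0 (Rmax M1 M2)). pose proof (Rmax_r x0 (Rmax M1 M2)).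
  pose proof (Rmax_l M1 M2). pose proof (Rmax_r M1 M2). lra. }
destruct HM as [HMx0 [HMM1 HMM2]].
assert (bR : forall t, M <= t -> L/2 < R1 t < 3*L/2).
{ intros t Ht. assert (Hl := HM1 t ltac:(lra)). apply Rabs_def2 in Hl. lra. }
assert (bQ : forall t, M <= t -> Rabs (Q1 t) < dl).
{ intros t Ht. assert (Hl := HM2 t ltac:(lra)). rewrite Rminus_0_r in Hl. exact Hl. }
assert (be : forall t, M <= t -> Rabs (e t) <= 3 * L / 2 * dl * K).
{ intros t Ht. unfold e. rewrite !Rabs_mult.
  pose proof (boundSC b2 b3 (2 * g t)). fold K in H0.
  assert (A1 : Rabs (R1 t) <= 3 * L / 2) by (destruct (bR t Ht); rewrite Rabs_right; lra).
  pose proof (bQ t Ht). pose proof (Rabs_pos (R1 t)). pose proof (Rabs_pos (Q1 t)).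
  pose proof (Rabs_pos (b2 * sin (2 * g t) - b3 * cos (2 * g t))).
  apply Rmult_le_compat; try nra. }
set (B := 9 * L * L * K / 8).
assert (bH : forall t, M <= t -> Rabs (H t) <= B).
{ intros t Ht. unfold H, B. unfold Rdiv. rewrite !Rabs_mult.
  rewrite (Rabs_right (/ 2)) by lra.
  pose proof (boundSC b2 b3 (2 * g t)). fold K in H0.
  assert (A1 : Rabs (R1 t) <= 3 * L / 2) by (destruct (bR t Ht); rewrite Rabs_right; lra).
  pose proof (Rabs_pos (R1 t)).
  pose proof (Rabs_pos (b2 * sin (2 * g t) - b3 * cos (2 * g t))).
  assert (Rabs (R1 t) * Rabs (R1 t) <= 9 * L * L / 4) by nra.
  assert (Rabs (R1 t) * Rabs (R1 t) * Rabs (b2 * sin (2 * g t) - b3 * cos (2 * g t)) <= 9 * L * L / 4 * K).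
  { apply Rmult_le_compat; nra. }
  lra. }
set (DM := RInt R1 x0 M). set (EM := RInt e x0 M).
set (C := B + Rabs (H x0) + Rabs EM).
assert (HC : 0 <= C) by (unfold C, B; pose proof (Rabs_pos (H x0)); pose proof (Rabs_pos EM);
  assert (0 <= L * L * K) by (apply Rmult_le_pos; nra); lra).
set (u := 4 * Rabs DM / L). set (v := 8 * C / (eps * L)).
assert (Hu : u * L = 4 * Rabs DM) by (unfold u; field; lra).
assert (Hv : v * (eps * L) = 8 * C) by (unfold v; field; split; lra).
assert (Hu0 : 0 <= u) by (unfold u; apply Rdiv_le_0_compat; [pose proof (Rabs_pos DM); lra | lra]).
assert (Hv0 : 0 <= v) by (unfold v; apply Rdiv_le_0_compat; [lra | nra]).
exists (M + u + v + 1). intros N HN.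
set (T := N - M).
assert (HT : T > u + v + 1) by (unfold T; lra).
assert (T1 : T * L > 4 * Rabs DM) by nra.
assert (T2 : T * (eps * L) > 8 * C) by (assert (0 < eps * L) by nra; nra).
assert (XR : forall a b, 0 < a -> 0 < b -> ex_RInt R1 a b) by (intros; apply cont_seg; auto).
assert (Xe : forall a b, 0 < a -> 0 < b -> ex_RInt e a b) by (intros; apply cont_seg; auto).
assert (DD : RInt R1 x0 N = DM + RInt R1 M N).
{ unfold DM. symmetry. apply (@RInt_Chasles R_CompleteNormedModule); apply XR; lra. }
assert (EE : RInt e x0 N = EM + RInt e M N).
{ unfold EM. symmetry. apply (@RInt_Chasles R_CompleteNormedModule); apply Xe; lra. }
assert (DR : RInt R1 M N >= T * (L / 2)).
{ apply Rle_ge. replace (T * (L/2)) with (RInt (fun _ => L/2) M N).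
  apply RInt_le. lra. apply ex_RInt_const. apply XR; lra.
  intros x Hx. destruct (bR x ltac:(lra)); lra.
  rewrite RInt_const. reflexivity. }
assert (ER : Rabs (RInt e M N) <= T * (3 * L / 2 * dl * K)).
{ apply abs_RInt_le_const. lra. apply Xe; lra. intros t Ht. apply be. lra. }
rewrite FTC by lra. rewrite DD, EE.
pose proof (bH N ltac:(lra)).
assert (Dpos : DM + RInt R1 M N >= T * L / 4).
{ pose proof (Rle_abs (- DM)) as Z. rewrite Rabs_Ropp in Z. nra. }
assert (TLe : T * L * eps > 0) by (assert (0 < T) by lra; assert (0 < T * L) by nra; nra).
assert (Num : Rabs (H N - H x0 + (EM + RInt e M N)) < eps * (DM + RInt R1 M N)).
{ assert (Rabs (H N - H x0 + (EM + RInt e M N)) <= Rabs (H N) + Rabs (H x0) + Rabs EM + Rabs (RInt e M N)).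
  { unfold Rminus. pose proof (Rabs_triang (H N + - H x0) (EM + RInt e M N)) as Z1.
    pose proof (Rabs_triang (H N) (- H x0)) as Z2. rewrite Rabs_Ropp in Z2.
    pose proof (Rabs_triang EM (RInt e M N)) as Z3. lra. }
  assert (T * (3 * L / 2 * dl * K) <= T * (3 * L / 2) * (eps / 16)).
  { assert (0 <= T * (3 * L / 2)) by nra. 
    replace (T * (3 * L / 2 * dl * K)) with (T * (3 * L / 2) * (dl * K)) by ring.
    apply Rmult_le_compat_l; auto. }
  assert (eps * (DM + RInt R1 M N) >= eps * (T * L / 4)) by nra.
  unfold C in T2. nra. }
rewrite Rminus_0_r. unfold Rdiv. rewrite Rabs_mult, Rabs_inv.
rewrite (Rabs_right (DM + RInt R1 M N)) by nra.
apply (Rmult_lt_reg_r (DM + RInt R1 M N)). nra.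
rewrite Rmult_assoc, Rinv_l by nra. lra.
Qed.

Lemma R1_pos (q : R -> R) (lam : R) (P1 Q1 R1 : R -> R) :
  0 < lam -> appell_sol q lam P1 Q1 R1 ->
  is_lim R1 p_infty (/ sqrt lam) ->
  (forall x, 0 < x -> R1 x <> 0) ->
  forall x, 0 < x -> 0 < R1 x.
Proof.
intros Hl Ha HR nz x Hx.
assert (L0 : 0 < / sqrt lam) by (apply Rinv_0_lt_compat, sqrt_lt_R0; lra).
destruct (Rlt_or_le 0 (R1 x)) as [h|h]; auto. exfalso.
assert (hx : R1 x < 0) by (destruct h; auto; exfalso; apply (nz x); auto).
destruct (lim_ev R1 (/ sqrt lam) HR (/ sqrt lam / 2)) as [M HM]; [lra|].
set (y := Rmax x M + 1).
assert (Hy : x < y /\ M < y) by (unfold y; pose proof (Rmax_l x M); pose proof (Rmax_r x M); lra).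
assert (Ry : 0 < R1 y) by (assert (Z := HM y ltac:(lra)); apply Rabs_def2 in Z; lra).
destruct (Ranalysis5.IVT_interv R1 x y) as [z [Hz Rz]]; auto; try lra.
- intros a Ha'. apply continuity_pt_filterlim.
  apply (@ex_derive_continuous R_AbsRing R_NormedModule). eexists. apply (Ha a). lra.
- apply (nz z); auto; lra.
Qed.

Theorem lemma3 (q0 q1 : R) (a : nat -> R) (q : R -> R) (lam : R)
  (P1 Q1 R1 : R -> R) :
  (forall x, 0 < x -> ex_pseries a x) ->
  (forall x, 0 < x -> q x = q_form q0 q1 a x) ->
  q0 >= -1/4 ->
  ~ (q0 = 0 /\ q1 = 0) ->
  (exists X, 0 < X /\
     (L1_tail q X \/
      (L1_tail (Derive q) X /\ is_lim q p_infty 0))) ->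
  0 < lam ->
  appell_sol q lam P1 Q1 R1 ->
  is_lim P1 p_infty (sqrt lam) ->
  is_lim Q1 p_infty 0 ->
  is_lim R1 p_infty (/ sqrt lam) ->
  (* (i) *)
  (forall (c b2 b3 x0 : R), 0 < c -> 0 < x0 ->
     is_lim
       (fun N =>
          RInt (fun x => b2 * third (U2 P1 Q1 R1 c x) + b3 * third (U3 P1 Q1 R1 c x)) x0 N
          / RInt R1 x0 N)
       p_infty 0)
  /\
  (* (ii) *)
  (forall (A : R) (u du v dv : R -> R) (at_ bt ct : R), 0 < A ->
     sl_sol q lam u du -> u A = 1 -> du A = 0 ->
     sl_sol q lam v dv -> v A = 0 -> dv A = 1 ->
     (forall x, 0 < x ->
        P1 x = at_ * (du x) ^ 2 + bt * (du x * dv x) + ct * (dv x) ^ 2 /\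
        Q1 x = at_ * (-2 * u x * du x) + bt * (- (u x * dv x + du x * v x))
               + ct * (-2 * v x * dv x) /\
        R1 x = at_ * (u x) ^ 2 + bt * (u x * v x) + ct * (v x) ^ 2) ->
     0 < at_ /\ 0 < ct).
Proof.
intros _ _ _ _ _ Hl Ha HP HQ HR.
assert (Hinv := inv_const q lam P1 Q1 R1 Hl Ha HP HQ HR).
assert (nz : forall x, 0 < x -> R1 x <> 0).
{ intros x Hx E. pose proof (Hinv x Hx) as Z. rewrite E in Z. nra. }
assert (pos := R1_pos q lam P1 Q1 R1 Hl Ha HR nz).
split.
- intros c b2 b3 x0 Hc Hx0.
  apply (ratio R1 Q1 (gam R1 c) (/ sqrt lam) b2 b3 x0).
  + apply Rinv_0_lt_compat, sqrt_lt_R0; lra.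
  + exact Hx0.
  + intros x Hx. apply (Ha x Hx).
  + intros x Hx. eexists. apply (Ha x Hx).
  + intros x Hx. unfold gam. apply (derive_RInt_pos (fun t => / R1 t)); auto.
    intros y Hy. apply (@ex_derive_continuous R_AbsRing R_NormedModule).
    auto_derive. split; [eexists; apply (Ha y Hy)|split; [apply nz; auto|auto]].
  + exact nz.
  + exact HR.
  + exact HQ.
- intros A u du v dv at_ bt ct HA _ uA duA _ vA dvA Hrep.
  destruct (Hrep A HA) as [eP [eQ eR]].
  rewrite uA, duA, vA, dvA in *.
  pose proof (Hinv A HA) as Z. pose proof (pos A HA) as Z2.
  rewrite eP, eQ, eR in Z. rewrite eR in Z2.
  assert (at_ > 0) by nra.
  split; nra.
Qed.
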